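(* Let $T:\mathcal L_n\rightrightarrows\mathcal L_n$ be defined by $z\in T(y)\iff P_{\mathcal N}(z)+P_{\mathcal M}(y)\in(\mathcal F+N_{\mathcal C})(P_{\mathcal N}(y)+P_{\mathcal M}(z))$, and let $A:\mathcal L_n\to\mathcal L_n$ be the symmetric positive definite invertible linear map $A(u)=P_{\mathcal N}(u)+rP_{\mathcal M}(u)$. Then the iterations of the IPHA are equivalent to those of the HIPPM applied to the operator $ATA$ with $\varepsilon_k=0$ and $c_k=r^{-1}$ for all $k$ (with the same choices of $\sigma_k$ and $\tau_k$), under the identification $z_k=x_k-r^{-1}w_k$ (equivalently $x_k=P_{\mathcal N}(z_k)$, $w_k=-rP_{\mathcal M}(z_k)$): an IPHA step from $(x_k,w_k)$ corresponds to an HIPPM step from $z_k$, the two stopping tests coincide, and the HIPPM update equals $z_{k+1}=x_{k+1}-r^{-1}w_{k+1}$.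
   Context: Multistage setting: $\Xi$ is a finite set of scenarios $\xi=(\xi_1,\dots,\xi_N)$ with probabilities $p(\xi)>0$; $n=n_1+\dots+n_N$. $\mathcal L_n$ is the space of functions $x:\Xi\to\mathbb R^n$, $x(\xi)=(x_1(\xi),\dots,x_N(\xi))$, $x_j(\xi)\in\mathbb R^{n_j}$, with inner product $\langle x,w\rangle=\sum_{\xi}p(\xi)\sum_{j}\langle x_j(\xi),w_j(\xi)\rangle$. $\mathcal N=\{x\in\mathcal L_n: x_j(\xi)\text{ does not depend on }\xi_j,\dots,\xi_N\}$, $\mathcal M=\mathcal N^\perp$, with orthogonal projections $P_{\mathcal N},P_{\mathcal M}$. For each $\xi$, $C(\xi)\subset\mathbb R^n$ is nonempty closed convex and $F(\cdot,\xi):\mathbb R^n\to\mathbb R^n$ is continuous monotone; $\mathcal C=\{x\in\mathcal L_n: x(\xi)\in C(\xi)\ \forall\xi\}$ and $\mathcal F(x)(\xi)=F(x(\xi),\xi)$. $r>0$ fixed. IPHA: choose $x_0\in\mathcal N$, $w_0\in\mathcal M$, $\bar\sigma\in(0,1)$, $\theta\in(0,1)$. At iteration $k$: choose $\sigma_k\in[0,\bar\sigma)$, find $\hat x^k,\hat w^k\in\mathcal L_n$ with $r(x_k(\xi)-\hat x^k(\xi))-w_k(\xi)\in F(\hat w^k(\xi),\xi)+N_{C(\xi)}(\hat w^k(\xi))$ for all $\xi$, $\delta^k=\hat w^k-\hat x^k$, and $\|\delta^k\|^2\le\sigma_k^2(\|a_k\|^2+\|b_k\|^2)$, where $a_k=x_k-P_{\mathcal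 N}(\hat x^k)+P_{\mathcal M}(\hat w^k)$, $b_k=x_k-P_{\mathcal N}(\hat w^k)+P_{\mathcal M}(\hat x^k)$. If $b_k=0$ stop; otherwise choose $\tau_k\in[1-\theta,1+\theta]$, set $\alpha_k=\langle a_k,b_k\rangle/\|a_k\|^2$, $x_{k+1}=x_k-\tau_k\alpha_k(x_k-P_{\mathcal N}(\hat x^k))$, $w_{k+1}=w_k+\tau_k\alpha_k rP_{\mathcal M}(\hat w^k)$. HIPPM (hybrid inexact proximal point method) for a maximal monotone operator $S$ on a Hilbert space, here with $\varepsilon_k=0$ and constant $c_k=c>0$: from $z_k$, choose $\sigma_k\in[0,\bar\sigma)$ and find $\hat z^k,\hat v^k$ with $\hat v^k\in S(\hat z^k)$, $\delta^k=c\hat v^k+\hat z^k-z_k$, $\|\delta^k\|^2\le\sigma_k^2(\|c\hat v^k\|^2+\|\hat z^k-z_k\|^2)$. Stop if $z_k=\hat z^k$; otherwise choose $\tau_k\in[1-\theta,1+\theta]$ and set $z_{k+1}=z_k-\tau_k a_k\hat v^k$ with $a_k=\langle\hat v^k,z_k-\hat z^k\rangle/\|\hat v^k\|^2$. *)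

(* Defs.v *)
From HB Require Import structures.
From mathcomp Require Import all_boot all_order all_algebra.
From mathcomp Require Import all_classical all_reals all_analysis.
From mathcomp Require Import matrix_topology matrix_normedtype.
Import Order.TTheory GRing.Theory Num.Theory numFieldNormedType.Exports.

Set Implicit Arguments.
Unset Strict Implicit.
Unset Printing Implicit Defensive.

Local Open Scope ring_scope.
Local Open Scope classical_set_scope.

(* Vectors of R^n are row vectors 'rV[R]_n; an element of L_n is a function
   S -> 'rV[R]_n, where S : finType is the (finite) scenario set Xi. *)

Section Defs.
Context {R : realType}.

Definition dotv {n : nat} (u v : 'rV[R]_n) : R := (u *m v^T) 0 0.

Definition normal_cone {V : zmodType} (ip : V -> V -> R) (K : set V) (u : V)
  : set V := [set v | K u /\ forall y, K y -> ip v (y - u) <= 0].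

Context {S : finType} {n : nat}.

Definition ipL (p : S -> R) (x w : S -> 'rV[R]_n) : R :=
  \sum_(s : S) p s * dotv (x s) (w s).

Definition sqnormL (p : S -> R) (x : S -> 'rV[R]_n) : R := ipL p x x.

(* Scenario s has components coord s l
   (l : 'I_N, 0-based), coordinate i of R^n belongs to stage (stage i)
   (0-based); x_j(xi) does not depend on xi_j, ..., xi_N, i.e. it is
   determined by the components with index < stage i. *)
Definition nonanticip {N : nat} {E : eqType} (coord : S -> 'I_N -> E)
  (stage : 'I_n -> 'I_N) : set (S -> 'rV[R]_n) :=
  [set x | forall (i : 'I_n) (s s' : S),
     (forall l : 'I_N, (l < stage i)%N -> coord s l = coord s' l) ->
     x s 0 i = x s' 0 i].

Definition orthL (p : S -> R) (V : set (S -> 'rV[R]_n)) : set (S -> 'rV[R]_n) :=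
  [set w | forall y, V y -> ipL p w y = 0].

Definition is_orth_proj (p : S -> R) (V : set (S -> 'rV[R]_n))
  (P : (S -> 'rV[R]_n) -> (S -> 'rV[R]_n)) : Prop :=
  forall x, V (P x) /\ forall y, V y -> ipL p (x - P x) y = 0.

Definition Cset (C : S -> set 'rV[R]_n) : set (S -> 'rV[R]_n) :=
  [set x | forall s, C s (x s)].

Definition Fcal (F : 'rV[R]_n -> S -> 'rV[R]_n) (x : S -> 'rV[R]_n)
  : S -> 'rV[R]_n := fun s => F (x s) s.

Definition FplusNC (p : S -> R) (F : 'rV[R]_n -> S -> 'rV[R]_n)
  (C : S -> set 'rV[R]_n) (u : S -> 'rV[R]_n) : set (S -> 'rV[R]_n) :=
  [set v | normal_cone (ipL p) (Cset C) u (v - Fcal F u)].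

Notation Lop := ((S -> 'rV[R]_n) -> (S -> 'rV[R]_n)).

Definition T_op (PN PM : Lop) (G : (S -> 'rV[R]_n) -> set (S -> 'rV[R]_n))
  (y : S -> 'rV[R]_n) : set (S -> 'rV[R]_n) :=
  [set z | G (PN y + PM z) (PN z + PM y)].

Definition A_op (PN PM : Lop) (r : R) (u : S -> 'rV[R]_n) : S -> 'rV[R]_n :=
  PN u + r *: PM u.

Definition ATA_op (A : Lop) (T : (S -> 'rV[R]_n) -> set (S -> 'rV[R]_n))
  (y : S -> 'rV[R]_n) : set (S -> 'rV[R]_n) := A @` T (A y).

Definition ipha_a (PN PM : Lop) (x xh wh : S -> 'rV[R]_n) := x - PN xh + PM wh.
Definition ipha_b (PN PM : Lop) (x xh wh : S -> 'rV[R]_n) := x - PN wh + PM xh.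

Definition ipha_step_ok (p : S -> R) (F : 'rV[R]_n -> S -> 'rV[R]_n)
  (C : S -> set 'rV[R]_n) (PN PM : Lop) (r sigbar : R)
  (x w : S -> 'rV[R]_n) (sig : R) (xh wh : S -> 'rV[R]_n) : Prop :=
  [/\ 0 <= sig < sigbar,
      (forall s, normal_cone dotv (C s) (wh s)
                   (r *: (x s - xh s) - w s - F (wh s) s)) &
      sqnormL p (wh - xh) <=
        sig ^+ 2 * (sqnormL p (ipha_a PN PM x xh wh) +
                    sqnormL p (ipha_b PN PM x xh wh))].

Definition ipha_alpha (p : S -> R) (PN PM : Lop) (x xh wh : S -> 'rV[R]_n) : R :=
  ipL p (ipha_a PN PM x xh wh) (ipha_b PN PM x xh wh) /
  sqnormL p (ipha_a PN PM x xh wh).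

Definition ipha_next (p : S -> R) (PN PM : Lop) (r : R)
  (x w : S -> 'rV[R]_n) (tau : R) (xh wh : S -> 'rV[R]_n)
  : (S -> 'rV[R]_n) * (S -> 'rV[R]_n) :=
  let al := ipha_alpha p PN PM x xh wh in
  (x - (tau * al) *: (x - PN xh), w + (tau * al * r) *: PM wh).

Definition hippm_step_ok (p : S -> R)
  (Sop : (S -> 'rV[R]_n) -> set (S -> 'rV[R]_n)) (c sigbar : R)
  (z : S -> 'rV[R]_n) (sig : R) (zh vh : S -> 'rV[R]_n) : Prop :=
  [/\ 0 <= sig < sigbar, Sop zh vh &
      sqnormL p (c *: vh + zh - z) <=
        sig ^+ 2 * (sqnormL p (c *: vh) + sqnormL p (zh - z))].

Definition hippm_next (p : S -> R) (z : S -> 'rV[R]_n) (tau : R)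
  (zh vh : S -> 'rV[R]_n) : S -> 'rV[R]_n :=
  z - (tau * (ipL p vh (z - zh) / sqnormL p vh)) *: vh.

End Defs.

(* Main.v *)
Require Import Defs.
From HB Require Import structures.
From mathcomp Require Import all_boot all_order all_algebra.
From mathcomp Require Import all_classical all_reals all_analysis.
From mathcomp Require Import matrix_topology matrix_normedtype.
From mathcomp Require Import ring lra.
Import Order.TTheory GRing.Theory Num.Theory numFieldNormedType.Exports.
Local Open Scope ring_scope.
Local Open Scope classical_set_scope.

Ltac pw := apply/funext => ?; apply/rowP => ?; rewrite ?fctE /= !mxE.

Section Aux.
Variables (R : realType) (S : finType) (n : nat) (p : S -> R).
Hypothesis p_pos : forall s, 0 < p s.
Local Notation V := (S -> 'rV[R]_n).

Lemma dotvE (u v : 'rV[R]_n) : dotv u v = \sum_j u 0 j * v 0 j.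
Proof. by rewrite /dotv !mxE; apply: eq_bigr => j _; rewrite mxE. Qed.

Lemma ipLE (x w : V) : ipL p x w = \sum_s p s * \sum_j x s 0 j * w s 0 j.
Proof. by apply: eq_bigr => s _; rewrite dotvE. Qed.

Lemma ipLC (x w : V) : ipL p x w = ipL p w x.
Proof.
rewrite !ipLE; apply: eq_bigr => s _; congr (_ * _).
by apply: eq_bigr => j _; exact: mulrC.
Qed.

Lemma ipLDl (x y w : V) : ipL p (x + y) w = ipL p x w + ipL p y w.
Proof.
rewrite !ipLE -big_split; apply: eq_bigr => s _ /=; rewrite -mulrDr -big_split.
by congr (_ * _); apply: eq_bigr => j _; rewrite ?fctE /= mxE mulrDl.
Qed.

Lemma ipLZl (k : R) (x w : V) : ipL p (k *: x) w = k * ipL p x w.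
Proof.
rewrite !ipLE mulr_sumr; apply: eq_bigr => s _ /=; rewrite mulrCA.
by congr (_ * _); rewrite mulr_sumr; apply: eq_bigr => j _; rewrite ?fctE /= mxE mulrA.
Qed.

Lemma ipLNl (x w : V) : ipL p (- x) w = - ipL p x w.
Proof. by rewrite -scaleN1r ipLZl mulN1r. Qed.

Lemma ipLBl (x y w : V) : ipL p (x - y) w = ipL p x w - ipL p y w.
Proof. by rewrite ipLDl ipLNl. Qed.

Lemma ipLZr (k : R) (x w : V) : ipL p x (k *: w) = k * ipL p x w.
Proof. by rewrite ipLC ipLZl ipLC. Qed.

Lemma ipLDr (x y w : V) : ipL p w (x + y) = ipL p w x + ipL p w y.
Proof. by rewrite ipLC ipLDl ipLC [ipL p y _]ipLC. Qed.

Lemma sqnormLN (x : V) : sqnormL p (- x) = sqnormL p x.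
Proof. by rewrite /sqnormL ipLNl ipLC ipLNl opprK. Qed.

Lemma mul_self_ge0 (a : R) : 0 <= a * a.
Proof. by rewrite -expr2 sqr_ge0. Qed.

Lemma ipL_def (x : V) : ipL p x x = 0 -> x = 0.
Proof.
rewrite ipLE => H0.
have H : forall s, p s * \sum_j x s 0 j * x s 0 j = 0.
  move=> s; apply: (psumr_eq0P _ H0) => // s0 _.
  apply: mulr_ge0; first exact: ltW.
  by apply: sumr_ge0 => j _; exact: mul_self_ge0.
have H1 : forall s, \sum_j x s 0 j * x s 0 j = 0.
  by move=> s; move/eqP: (H s); rewrite mulf_eq0 (gt_eqF (p_pos s)) /= => /eqP.
apply/funext => s; apply/rowP => j; rewrite ?fctE mxE.
have : x s 0 j * x s 0 j = 0.
  by apply: (psumr_eq0P _ (H1 s)) => // i _; exact: mul_self_ge0.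
by move/eqP; rewrite mulf_eq0 orbb => /eqP.
Qed.

Lemma proj_eq (Vs : set V) (P : V -> V) (x u : V) :
  (forall a b, Vs a -> Vs b -> Vs (a - b)) -> is_orth_proj p Vs P -> Vs u ->
  (forall y, Vs y -> ipL p (x - u) y = 0) -> P x = u.
Proof.
move=> Vsub /(_ x) [VP HP] Vu Hu.
apply/eqP; rewrite -subr_eq0; apply/eqP; apply: ipL_def.
have E : P x - u = (x - u) - (x - P x) by pw; ring.
have VD : Vs (P x - u) by apply: Vsub.
by rewrite {1}E ipLBl Hu // HP // subrr.
Qed.

Lemma nc_L (C : S -> set 'rV[R]_n) (wh v : V) :
  (forall s, normal_cone dotv (C s) (wh s) (v s)) ->
  normal_cone (ipL p) (Cset C) wh v.
Proof.
move=> H; split; first by move=> s; case: (H s).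
move=> Y CY; rewrite /ipL; apply: sumr_le0 => s _.
apply: mulr_ge0_le0; first exact: ltW.
exact: (H s).2 (Y s) (CY s).
Qed.

Lemma nc_pw (C : S -> set 'rV[R]_n) (wh v : V) :
  normal_cone (ipL p) (Cset C) wh v ->
  forall s, normal_cone dotv (C s) (wh s) (v s).
Proof.
move=> [Cw H] s; split; first exact: Cw s.
move=> y Cy.
pose Y := fun t => if t == s then y else wh t.
have CY : Cset C Y by move=> t; rewrite /Y; case: eqP => [->|].
have := H Y CY; rewrite /ipL (bigD1 s) //= big1 ?addr0.
  rewrite /Y ?fctE /= eqxx pmulr_rle0 //.
move=> t /negbTE ts; rewrite /Y ?fctE /= ts subrr.
by rewrite /dotv trmx0 mulmx0 mxE mulr0.
Qed.

End Aux.
Arguments proj_eq {R S n p}.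
Arguments nc_L {R S n p}.
Arguments nc_pw {R S n p}.

Theorem theorem2
  (R : realType) (S : finType) (NN : nat) (E : eqType)
  (coord : S -> 'I_NN -> E) (coord_inj : injective coord)
  (n : nat) (stage : 'I_n -> 'I_NN)
  (stage_mono : forall i j : 'I_n, (i <= j)%N -> (stage i <= stage j)%N)
  (p : S -> R) (p_pos : forall s, 0 < p s) (p_sum : \sum_(s : S) p s = 1)
  (C : S -> set 'rV[R]_n)
  (C_ne : forall s, C s !=set0) (C_closed : forall s, closed (C s))
  (C_convex : forall s, convex_set (C s : set (convex_lmodType 'rV[R]_n)))
  (F : 'rV[R]_n -> S -> 'rV[R]_n)
  (F_cont : forall s, continuous (F^~ s))
  (F_mono : forall s u v, 0 <= dotv (F u s - F v s) (u - v))
  (r : R) (r_pos : 0 < r)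
  (PN PM : (S -> 'rV[R]_n) -> (S -> 'rV[R]_n))
  (PN_proj : is_orth_proj p (nonanticip coord stage) PN)
  (PM_proj : is_orth_proj p (orthL p (nonanticip coord stage)) PM)
  (sigbar theta : R) (sigbar01 : 0 < sigbar < 1) (theta01 : 0 < theta < 1) :
  let Nset := nonanticip coord stage in
  let Mset := orthL p Nset in
  let Top := T_op PN PM (FplusNC p F C) in
  let Aop := A_op PN PM r in
  let Sop := ATA_op Aop Top in
  [/\ (* identification z = x - r^-1 w  <->  x = P_N z, w = -r P_M z *)
      (forall x w, Nset x -> Mset w ->
         PN (x - r^-1 *: w) = x /\ - r *: PM (x - r^-1 *: w) = w),
      (* an IPHA step yields an HIPPM step for S = ATA, c = r^-1 *)
      (forall x w sig xh wh, Nset x -> Mset w ->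
         ipha_step_ok p F C PN PM r sigbar x w sig xh wh ->
         exists zh vh,
           [/\ hippm_step_ok p Sop r^-1 sigbar (x - r^-1 *: w) sig zh vh,
               (ipha_b PN PM x xh wh = 0 <-> x - r^-1 *: w = zh) &
               forall tau, 1 - theta <= tau <= 1 + theta ->
                 ipha_b PN PM x xh wh <> 0 ->
                 let xw' := ipha_next p PN PM r x w tau xh wh in
                 [/\ Nset xw'.1, Mset xw'.2 &
                     hippm_next p (x - r^-1 *: w) tau zh vh
                       = xw'.1 - r^-1 *: xw'.2]]) &
      (* and conversely an HIPPM step yields an IPHA step *)
      (forall x w sig zh vh, Nset x -> Mset w ->
         hippm_step_ok p Sop r^-1 sigbar (x - r^-1 *: w) sig zh vh ->
         exists xh wh,
           [/\ ipha_step_ok p F C PN PM r sigbar x w sig xh wh,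
               (ipha_b PN PM x xh wh = 0 <-> x - r^-1 *: w = zh) &
               forall tau, 1 - theta <= tau <= 1 + theta ->
                 ipha_b PN PM x xh wh <> 0 ->
                 let xw' := ipha_next p PN PM r x w tau xh wh in
                 [/\ Nset xw'.1, Mset xw'.2 &
                     hippm_next p (x - r^-1 *: w) tau zh vh
                       = xw'.1 - r^-1 *: xw'.2]])].
Proof.
move=> Nset Mset Top Aop Sop.
have r0 : r != 0 by rewrite gt_eqF.
have Nadd : forall a b, Nset a -> Nset b -> Nset (a + b).
  move=> a b Ha Hb i s s' H; rewrite ?fctE /= !mxE.
  by rewrite (Ha i s s' H) (Hb i s s' H).
have Nscale : forall (k : R) a, Nset a -> Nset (k *: a).
  move=> k a Ha i s s' H; rewrite ?fctE /= !mxE.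
  by rewrite (Ha i s s' H).
have Nopp : forall a, Nset a -> Nset (- a).
  by move=> a Ha; rewrite -scaleN1r; apply: (Nscale).
have Nsub : forall a b, Nset a -> Nset b -> Nset (a - b).
  by move=> a b Ha Hb; apply: (Nadd) => //; apply: (Nopp).
have Madd : forall a b, Mset a -> Mset b -> Mset (a + b).
  by move=> a b Ha Hb y Hy; rewrite ipLDl Ha // Hb // addr0.
have Mscale : forall (k : R) a, Mset a -> Mset (k *: a).
  by move=> k a Ha y Hy; rewrite ipLZl Ha // mulr0.
have Mopp : forall a, Mset a -> Mset (- a).
  by move=> a Ha; rewrite -scaleN1r; apply: (Mscale).
have Msub : forall a b, Mset a -> Mset b -> Mset (a - b).
  by move=> a b Ha Hb; apply: (Madd) => //; apply: (Mopp).
have PN_in : forall v, Nset (PN v) by move=> v; case: (PN_proj v).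
have PM_in : forall v, Mset (PM v) by move=> v; case: (PM_proj v).
have orthNM : forall a b, Nset a -> Mset b -> ipL p a b = 0.
  by move=> a b Ha Hb; rewrite ipLC; apply: Hb.
have PME : forall v, PM v = v - PN v.
  move=> v; apply: (proj_eq p_pos _ PM v (v - PN v) Msub PM_proj).
    by case: (PN_proj v).
  move=> y My; have -> : v - (v - PN v) = PN v by pw; ring.
  by apply: orthNM.
have PNdec : forall m k, Nset m -> Mset k -> PN (m + k) = m.
  move=> m k Hm Hk; apply: (proj_eq p_pos _ PN (m + k) m Nsub PN_proj) => // y Ny.
  have -> : m + k - m = k by pw; ring.
  by apply: Hk.
have PMdec : forall m k, Nset m -> Mset k -> PM (m + k) = k.
  by move=> m k Hm Hk; rewrite PME PNdec //; pw; ring.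
have common : forall x w xh wh zh vh, Nset x -> Mset w ->
    vh = r *: ipha_a PN PM x xh wh ->
    x - r^-1 *: w - zh = ipha_b PN PM x xh wh ->
    [/\ sqnormL p (r^-1 *: vh + zh - (x - r^-1 *: w)) = sqnormL p (wh - xh),
        sqnormL p (r^-1 *: vh) = sqnormL p (ipha_a PN PM x xh wh),
        sqnormL p (zh - (x - r^-1 *: w)) = sqnormL p (ipha_b PN PM x xh wh),
        (ipha_b PN PM x xh wh = 0 <-> x - r^-1 *: w = zh) &
        forall tau, 1 - theta <= tau <= 1 + theta ->
                 ipha_b PN PM x xh wh <> 0 ->
                 let xw' := ipha_next p PN PM r x w tau xh wh in
                 [/\ Nset xw'.1, Mset xw'.2 &
                     hippm_next p (x - r^-1 *: w) tau zh vh
                       = xw'.1 - r^-1 *: xw'.2]].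
  move=> x w xh wh zh vh Nx Mw Hv Hb.
  have Ea : r^-1 *: vh = ipha_a PN PM x xh wh.
    by rewrite Hv scalerA mulVf // scale1r.
  have Eb : zh - (x - r^-1 *: w) = - ipha_b PN PM x xh wh.
    by rewrite -Hb; pw; ring.
  split.
  - rewrite -addrA Ea Eb; congr (sqnormL p _).
    by rewrite /ipha_a /ipha_b !PME; pw; ring.
  - by rewrite Ea.
  - by rewrite Eb sqnormLN.
  - rewrite -Hb; split; first by move/eqP; rewrite subr_eq0 => /eqP.
    by move=> ->; rewrite subrr.
  move=> tau _ _; rewrite /ipha_next /=; split.
  - by apply: (Nsub) => //; apply: (Nscale); apply: (Nsub).
  - by apply: (Madd) => //; apply: (Mscale).
  rewrite /hippm_next Hb Hv /sqnormL ipLZl ipLZl ipLZr.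
  have -> : tau * (r * ipL p (ipha_a PN PM x xh wh) (ipha_b PN PM x xh wh) /
      (r * (r * ipL p (ipha_a PN PM x xh wh) (ipha_a PN PM x xh wh)))) =
      tau * ipha_alpha p PN PM x xh wh / r.
    rewrite /ipha_alpha /sqnormL !invfM.
    set q := (ipL p _ _)^-1; set ip := ipL p _ _.
    by field.
  set al := ipha_alpha _ _ _ _ _ _.
  by rewrite /ipha_a; pw; field.
split.
- move=> x w Nx Mw; split.
    by rewrite PNdec //; apply: (Mopp); apply: (Mscale).
  rewrite PMdec //; last by apply: (Mopp); apply: (Mscale).
  by pw; field.
- move=> x w sig xh wh Nx Mw [Hsig Hnc Hsq].
  pose zh := PN wh - PM xh - r^-1 *: w.
  pose vh := r *: ipha_a PN PM x xh wh.
  have Hb : x - r^-1 *: w - zh = ipha_b PN PM x xh wh.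
    by rewrite /zh /ipha_b; pw; ring.
  have [E1 E2 E3 Estop Eupd] := common x w xh wh zh vh Nx Mw erefl Hb.
  exists zh, vh; split => //.
  split => //; last by rewrite E1 E2 E3.
  pose u := r *: x - r *: PN xh + PM wh.
  have PNzh : PN zh = PN wh.
    rewrite (_ : zh = PN wh + (- PM xh - r^-1 *: w)); last by rewrite /zh; pw; ring.
    by rewrite PNdec //; apply: (Msub); [apply: (Mopp)|apply: (Mscale)].
  have PMzh : PM zh = - PM xh - r^-1 *: w.
    rewrite (_ : zh = PN wh + (- PM xh - r^-1 *: w)); last by rewrite /zh; pw; ring.
    by rewrite PMdec //; apply: (Msub); [apply: (Mopp)|apply: (Mscale)].
  have Ey : Aop zh = PN wh + (- (r *: PM xh) - w).
    by rewrite /Aop /A_op PNzh PMzh; pw; field.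
  have My : Mset (- (r *: PM xh) - w).
    by apply: (Msub) => //; apply: (Mopp); apply: (Mscale).
  have PNy : PN (Aop zh) = PN wh by rewrite Ey PNdec.
  have PMy : PM (Aop zh) = - (r *: PM xh) - w by rewrite Ey PMdec.
  have Eu : u = (r *: x - r *: PN xh) + PM wh by [].
  have Nu : Nset (r *: x - r *: PN xh) by apply: (Nsub); apply: (Nscale).
  have PNu : PN u = r *: x - r *: PN xh by rewrite Eu PNdec.
  have PMu : PM u = PM wh by rewrite Eu PMdec.
  exists u.
    rewrite /Top /T_op /=.
    have -> : PN (Aop zh) + PM u = wh by rewrite PNy PMu (PME wh); pw; ring.
    have -> : PN u + PM (Aop zh) = r *: (x - xh) - w.
      by rewrite PNu PMy (PME xh); pw; ring.
    by apply: (nc_L p_pos) => s; apply: Hnc.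
  by rewrite /Aop /A_op PNu PMu /vh /ipha_a; pw; ring.
- move=> x w sig zh vh Nx Mw [Hsig [u Tu Au] Hsq].
  pose y := Aop zh.
  pose wh := PN y + PM u.
  pose xh := x - r^-1 *: (PN u + PM y + w).
  have PNy : PN y = PN zh by rewrite /y /Aop /A_op PNdec //; apply: (Mscale).
  have PMy : PM y = r *: PM zh by rewrite /y /Aop /A_op PMdec //; apply: (Mscale).
  have PNwh : PN wh = PN y by rewrite /wh PNdec.
  have PMwh : PM wh = PM u by rewrite /wh PMdec.
  have Exh : xh = (x - r^-1 *: PN u) + (- (r^-1 *: (PM y + w))).
    by rewrite /xh; pw; ring.
  have Nxh : Nset (x - r^-1 *: PN u) by apply: (Nsub) => //; apply: (Nscale).
  have Mxh : Mset (- (r^-1 *: (PM y + w))).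
    by apply: (Mopp); apply: (Mscale); apply: (Madd).
  have PNxh : PN xh = x - r^-1 *: PN u by rewrite Exh PNdec.
  have PMxh : PM xh = - (r^-1 *: (PM y + w)) by rewrite Exh PMdec.
  have Hv : vh = r *: ipha_a PN PM x xh wh.
    by rewrite -Au /Aop /A_op /ipha_a PNxh PMwh; pw; field.
  have Hb : x - r^-1 *: w - zh = ipha_b PN PM x xh wh.
    by rewrite /ipha_b PNwh PNy PMxh PMy (PME zh); pw; field.
  have [E1 E2 E3 Estop Eupd] := common x w xh wh zh vh Nx Mw Hv Hb.
  exists xh, wh; split => //.
  split => //; last by rewrite -E1 -E2 -E3.
  move=> s.
  have Ecn : r *: (x - xh) - w = PN u + PM y by rewrite /xh; pw; field.
  have := nc_pw p_pos C wh (PN u + PM y - Fcal F wh) Tu s.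
  by rewrite -Ecn.
Qed.
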